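(* Let $A$ be the free $\mathbb{Z}$-module with basis $e_1,\dots,e_n,f_1,\dots,f_n,g_1,\dots,g_n$. For $i=1,\dots,n-1$ define automorphisms $\Delta(\sigma_i):e_i\mapsto e_{i+1}+g_i,\ e_{i+1}\mapsto e_i-g_{i+1},\ g_i\mapsto g_{i+1},\ g_{i+1}\mapsto g_i$ and $\Delta(\rho_i):e_i\leftrightarrow e_{i+1},\ f_i\leftrightarrow f_{i+1},\ g_i\leftrightarrow g_{i+1}$ (swaps), all other basis elements fixed. Then this extends to a linear representation $\Delta:FVB_n\to{\rm Aut}(A)={\rm GL}_{3n}(\mathbb{Z})$. Moreover, $\Delta$ does not preserve the forbidden relations (for $n\ge3$ and $i=1,\dots,n-2$, $\Delta(\rho_i\sigma_{i+1}\sigma_i)\ne\Delta(\sigma_{i+1}\sigma_i\rho_{i+1})$), and for $i=1,\dots,n-2$ the elements $(\rho_i\sigma_{i+1})^6$ do not belong to $\ker(\Delta)$.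
   Context: $FVB_n$ is the flat virtual braid group: generators $\sigma_1,\dots,\sigma_{n-1},\rho_1,\dots,\rho_{n-1}$, relations $\sigma_i\sigma_j=\sigma_j\sigma_i$, $\rho_i\rho_j=\rho_j\rho_i$, $\sigma_i\rho_j=\rho_j\sigma_i$ for $|i-j|\ge2$; $\sigma_i\sigma_{i+1}\sigma_i=\sigma_{i+1}\sigma_i\sigma_{i+1}$; $\rho_i\rho_{i+1}\rho_i=\rho_{i+1}\rho_i\rho_{i+1}$; $\rho_i\rho_{i+1}\sigma_i=\sigma_{i+1}\rho_i\rho_{i+1}$; $\rho_i^2=\sigma_i^2=1$. The forbidden relations are $\rho_i\sigma_{i+1}\sigma_i=\sigma_{i+1}\sigma_i\rho_{i+1}$. Maps are composed on the right: $(fg)(x)=g(f(x))$. *)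

(* Defs.v *)
From mathcomp Require Import all_boot all_order all_algebra.
Set Implicit Arguments. Unset Strict Implicit. Unset Printing Implicit Defensive.
Import GRing.Theory Num.Theory.
Local Open Scope ring_scope.

(* Basis of A = Z^(3n), indexed by 0..3n-1 (1-based paper indices k = 1..n):
   e_k |-> k-1,  f_k |-> n+k-1,  g_k |-> 2n+k-1.
   Endomorphisms act on ROW vectors: row r of the matrix is the image of the
   r-th basis vector.  Hence M_f *m M_g is the matrix of "first f, then g",
   matching the convention (fg)(x) = g(f(x)). *)
Definition idxE (n k : nat) : nat := k.-1.
Definition idxF (n k : nat) : nat := n + k.-1.
Definition idxG (n k : nat) : nat := n + n + k.-1.

Definition bit (b : bool) : int := (nat_of_bool b)%:Z.

Definition sigma_coef (n i r c : nat) : int :=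
  if r == idxE n i then bit (c == idxE n i.+1) + bit (c == idxG n i)
  else if r == idxE n i.+1 then bit (c == idxE n i) - bit (c == idxG n i.+1)
  else if r == idxG n i then bit (c == idxG n i.+1)
  else if r == idxG n i.+1 then bit (c == idxG n i)
  else bit (c == r).

Definition rho_perm (n i r : nat) : nat :=
  if r == idxE n i then idxE n i.+1
  else if r == idxE n i.+1 then idxE n i
  else if r == idxF n i then idxF n i.+1
  else if r == idxF n i.+1 then idxF n i
  else if r == idxG n i then idxG n i.+1
  else if r == idxG n i.+1 then idxG n i
  else r.

Definition rho_coef (n i r c : nat) : int := bit (c == rho_perm n i r).

Definition DSigma (n i : nat) : 'M[int]_(3 * n) :=
  \matrix_(r, c) sigma_coef n i r c.
Definition DRho (n i : nat) : 'M[int]_(3 * n) :=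
  \matrix_(r, c) rho_coef n i r c.

Definition mx_pow6 (m : nat) (P : 'M[int]_m) : 'M[int]_m :=
  P *m P *m P *m P *m P *m P.

Definition is_FVB_rep (n : nat) (S R : nat -> 'M[int]_(3 * n)) : Prop :=
  (forall i, (1 <= i)%N -> (i < n)%N -> S i \in unitmx /\ R i \in unitmx) /\
  (forall i j, (1 <= i)%N -> (i < n)%N -> (1 <= j)%N -> (j < n)%N -> ((i.+1 < j) || (j.+1 < i))%N ->
      [/\ S i *m S j = S j *m S i,
          R i *m R j = R j *m R i &
          S i *m R j = R j *m S i]) /\
  (forall i, (1 <= i)%N -> (i.+1 < n)%N ->
      [/\ S i *m S i.+1 *m S i = S i.+1 *m S i *m S i.+1,
          R i *m R i.+1 *m R i = R i.+1 *m R i *m R i.+1 &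
          R i *m R i.+1 *m S i = S i.+1 *m R i *m R i.+1]) /\
  (forall i, (1 <= i)%N -> (i < n)%N -> R i *m R i = 1%:M /\ S i *m S i = 1%:M).

(* Main.v *)
Require Import Defs.
From mathcomp Require Import all_boot all_order all_algebra.
From mathcomp Require Import zify.
Local Open Scope ring_scope.
Unset Lia Cache.
Import GRing.Theory.

Definition ev (n k : nat) : 'rV[int]_(3 * n) := \row_c bit ((c : nat) == k).

Lemma ev_mul n k (f : nat -> nat -> int) : (k < 3 * n)%N ->
  ev n k *m (\matrix_(r, c) f r c : 'M_(3 * n)) = \row_c f k c.
Proof.
move=> hk; apply/rowP => c; rewrite !mxE (bigD1 (Ordinal hk)) //= !mxE eqxx mul1r.
rewrite big1 ?addr0 // => j hj; rewrite !mxE.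
have -> : ((j : nat) == k) = false.
  by apply/negbTE; apply: contra hj => /eqP e; apply/eqP; apply: val_inj.
by rewrite mul0r.
Qed.

Lemma mx_eq_ev n (A B : 'M[int]_(3 * n)) :
  (forall k, (k < 3 * n)%N -> ev n k *m A = ev n k *m B) -> A = B.
Proof.
move=> H; apply/row_matrixP => k; rewrite !rowE.
have -> : delta_mx 0 k = ev n k.
  apply/rowP => c; rewrite !mxE /bit /=.
  by rewrite natz.
by apply: H; exact: ltn_ord.
Qed.

Ltac clear_neqs := repeat match goal with H : _ <> _ |- _ => clear H end.
Ltac lia' := clear_neqs; unfold idxE, idxF, idxG in *; lia.

Ltac dec_if := repeat match goal with
  |- context[if ?a == ?b then _ else _] =>
     let E := fresh "E" in
     first [ have E : (a == b) = false by apply/negbTE/eqP; assumption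
           | have E : (a == b) = true by apply/eqP; reflexivity
           | have E : (a == b) = false by apply/negbTE/eqP; lia'
           | have E : (a == b) = true by apply/eqP; lia' ];
     rewrite E; clear E
  end.

Lemma sigE n i k : (0 < i)%N -> (i < n)%N -> (k < 3 * n)%N ->
  ev n k *m DSigma n i =
  if k == idxE n i then ev n (idxE n i.+1) + ev n (idxG n i)
  else if k == idxE n i.+1 then ev n (idxE n i) - ev n (idxG n i.+1)
  else if k == idxG n i then ev n (idxG n i.+1)
  else if k == idxG n i.+1 then ev n (idxG n i)
  else ev n k.
Proof.
move=> h1 h2 h3; rewrite /DSigma ev_mul //; apply/rowP => c; rewrite !mxE /sigma_coef.
by do 4 (case: ifP => _; rewrite ?mxE //).
Qed.

Lemma rhoE n i k : (k < 3 * n)%N ->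
  ev n k *m DRho n i = ev n (rho_perm n i k).
Proof.
by move=> h; rewrite /DRho ev_mul //; apply/rowP => c; rewrite !mxE /rho_coef.
Qed.

Ltac step := match goal with
  | |- context[ev ?n ?k *m DSigma ?n ?i] =>
      let h1 := fresh in let h2 := fresh in let h3 := fresh in
      have h1 : (0 < i)%N; [lia'|]; have h2 : (i < n)%N; [lia'|];
      have h3 : (k < 3 * n)%N; [lia'|];
      rewrite (@sigE _ _ _ h1 h2 h3); clear h1 h2 h3; dec_if
  | |- context[ev ?n ?k *m DRho ?n ?i] =>
      let h3 := fresh in
      have h3 : (k < 3 * n)%N; [lia'|];
      rewrite (@rhoE _ i _ h3); clear h3; rewrite /rho_perm; dec_if
  end.

Ltac compute_rows := rewrite ?mulmxA; repeat (rewrite ?mulmxDl ?mulmxBl ?mulNmx; step).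

Ltac finish := apply/rowP => c; rewrite !mxE; clear_neqs; lia.

Ltac casek k s := let e := fresh "e" in have [e|/eqP ?] := eqVneq k s; [subst k|].

Ltac dec_bit := repeat match goal with
  |- context[bit (?a == ?b)] =>
     let E := fresh "E" in
     first [ have E : (a == b) = true by apply/eqP; lia'
           | have E : (a == b) = false by apply/negbTE/eqP; lia' ];
     rewrite E; clear E
  end.

Lemma sqS n i : (1 <= i)%N -> (i < n)%N -> DSigma n i *m DSigma n i = 1%:M.
Proof.
move=> h1 h2; apply: mx_eq_ev => k hk; rewrite mulmx1.
casek k (idxE n i); try casek k (idxE n i.+1);
try casek k (idxG n i); try casek k (idxG n i.+1).
all: compute_rows.
all: finish.
Qed.

Lemma sqR n i : (1 <= i)%N -> (i < n)%N -> DRho n i *m DRho n i = 1%:M.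
Proof.
move=> h1 h2; apply: mx_eq_ev => k hk; rewrite mulmx1.
casek k (idxE n i); try casek k (idxE n i.+1);
try casek k (idxF n i); try casek k (idxF n i.+1);
try casek k (idxG n i); try casek k (idxG n i.+1).
all: compute_rows.
all: finish.
Qed.

Ltac far_cases n k i j :=
  casek k (idxE n i); try casek k (idxE n i.+1);
  try casek k (idxF n i); try casek k (idxF n i.+1);
  try casek k (idxG n i); try casek k (idxG n i.+1);
  try casek k (idxE n j); try casek k (idxE n j.+1);
  try casek k (idxF n j); try casek k (idxF n j.+1);
  try casek k (idxG n j); try casek k (idxG n j.+1).

Lemma far n i j : (1 <= i)%N -> (i < n)%N -> (1 <= j)%N -> (j < n)%N ->
  ((i.+1 < j) || (j.+1 < i))%N ->
  [/\ DSigma n i *m DSigma n j = DSigma n j *m DSigma n i,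
      DRho n i *m DRho n j = DRho n j *m DRho n i &
      DSigma n i *m DRho n j = DRho n j *m DSigma n i].
Proof.
move=> h1 h2 h3 h4 /orP [] hij; split; apply: mx_eq_ev => k hk; far_cases n k i j.
all: compute_rows.
all: finish.
Qed.

Ltac braid_cases n k i :=
  casek k (idxE n i); try casek k (idxE n i.+1); try casek k (idxE n i.+2);
  try casek k (idxF n i); try casek k (idxF n i.+1); try casek k (idxF n i.+2);
  try casek k (idxG n i); try casek k (idxG n i.+1); try casek k (idxG n i.+2).

Lemma braid n i : (1 <= i)%N -> (i.+1 < n)%N ->
  [/\ DSigma n i *m DSigma n i.+1 *m DSigma n i = DSigma n i.+1 *m DSigma n i *m DSigma n i.+1,
      DRho n i *m DRho n i.+1 *m DRho n i = DRho n i.+1 *m DRho n i *m DRho n i.+1 &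
      DRho n i *m DRho n i.+1 *m DSigma n i = DSigma n i.+1 *m DRho n i *m DRho n i.+1].
Proof.
move=> h1 h2; split; apply: mx_eq_ev => k hk; braid_cases n k i.
all: compute_rows.
all: finish.
Qed.

Lemma forb n i : (1 <= i)%N -> (i.+1 < n)%N ->
     DRho n i *m DSigma n i.+1 *m DSigma n i <>
     DSigma n i.+1 *m DSigma n i *m DRho n i.+1.
Proof.
move=> h1 h2 H.
have hk : (idxF n i < 3 * n)%N by rewrite /idxF; lia.
have := congr1 (mulmx (ev n (idxF n i))) H.
compute_rows.
move/rowP/(_ (Ordinal hk)); rewrite !mxE /=.
dec_bit; rewrite /bit /=; lia.
Qed.

Lemma pow6 n i : (1 <= i)%N -> (i.+1 < n)%N ->
     mx_pow6 (DRho n i *m DSigma n i.+1) <> 1%:M.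
Proof.
move=> h1 h2 H.
have hk : (idxE n i < 3 * n)%N by rewrite /idxE; lia.
have hc : (idxG n i.+1 < 3 * n)%N by rewrite /idxG; lia.
have := congr1 (mulmx (ev n (idxE n i))) H.
rewrite /mx_pow6 mulmx1.
compute_rows.
move/rowP/(_ (Ordinal hc)); rewrite !mxE /=.
dec_bit; rewrite /bit /=; lia.
Qed.

Theorem theorem3 (n : nat) :
  is_FVB_rep (DSigma n) (DRho n) /\
  (forall i, (1 <= i)%N -> (i.+1 < n)%N ->
     DRho n i *m DSigma n i.+1 *m DSigma n i <>
     DSigma n i.+1 *m DSigma n i *m DRho n i.+1) /\
  (forall i, (1 <= i)%N -> (i.+1 < n)%N ->
     mx_pow6 (DRho n i *m DSigma n i.+1) <> 1%:M).
Proof.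
split; last by split; [exact: forb | exact: pow6].
split.
  move=> i h1 h2; split.
    by case: (mulmx1_unit (sqS n i h1 h2)).
  by case: (mulmx1_unit (sqR n i h1 h2)).
split; first exact: far.
split; first exact: braid.
by move=> i h1 h2; split; [exact: sqR | exact: sqS].
Qed.
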